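(* Every countable group $G$ is poly-MT; that is, for every finite $F\subseteq G$ there is a fair polytile $(T_1,\dots,T_k)$ of $G$ with $F\subseteq T_1$.
   Context: For a countable group $G$, a tuple $(T_1,\dots,T_k)$ of finite subsets of $G$, each containing $1_G$, is a polytile if there are non-empty sets $\Delta_1,\dots,\Delta_k\subseteq G$ such that $G$ is the disjoint union $\coprod_{1\le i\le k,\ \delta\in\Delta_i}\delta T_i$. It is fair if all $T_i$ have the same cardinality. *)

(* Defs.v *)
From mathcomp Require Import all_boot.
From mathcomp Require Import finmap.
Set Implicit Arguments. Unset Strict Implicit. Unset Printing Implicit Defensive.
Local Open Scope fset_scope.

Definition is_group (G : Type) (mul : G -> G -> G) (one : G) (inv : G -> G) : Prop :=
  (forall x y z, mul x (mul y z) = mul (mul x y) z) /\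
  (forall x, mul one x = x) /\ (forall x, mul x one = x) /\
  (forall x, mul (inv x) x = one) /\ (forall x, mul x (inv x) = one).

(* (T_1,...,T_k) is a polytile: each T_i is a finite set containing 1, and
   there are non-empty Delta_i with G the disjoint union of the translates
   delta T_i (i, delta in Delta_i): every g lies in exactly one translate,
   indexed by a unique pair (i, delta). *)
Definition polytile (G : choiceType) (mul : G -> G -> G) (one : G)
    (k : nat) (T : 'I_k -> {fset G}) : Prop :=
  (forall i, one \in T i) /\
  exists Delta : 'I_k -> G -> Prop,
    (forall i, exists d, Delta i d) /\
    (forall g : G, exists! p : 'I_k * G,
        Delta p.1 p.2 /\ exists2 t, t \in T p.1 & g = mul p.2 t).

Definition fair_polytile (G : choiceType) (mul : G -> G -> G) (one : G)
    (k : nat) (T : 'I_k -> {fset G}) : Prop :=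
  polytile mul one T /\ (forall i j, #|` T i| = #|` T j|).

(* Main.v *)
Require Import Defs.
From Stdlib Require Import Classical ClassicalEpsilon.
From Stdlib Require List.
From mathcomp Require Import all_boot.
From mathcomp Require Import finmap.
From mathcomp Require Import zify.
Set Implicit Arguments. Unset Strict Implicit. Unset Printing Implicit Defensive.
Local Open Scope fset_scope.

Section Carry.
Variable T : choiceType.
Variable dep : T -> nat.

Lemma seq_argmax (s : seq T) x0 : x0 \in s ->
  exists2 y, y \in s & forall z, z \in s -> dep z <= dep y.
Proof.
elim: s x0 => [|a s IH] x0 //.
move=> _; case: s IH => [|b s] IH.
  by exists a; rewrite ?inE ?eqxx // => z; rewrite !inE => /eqP ->.
have [y yW ym] := IH b (mem_head _ _).
case: (leqP (dep a) (dep y)) => h.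
  exists y; first by rewrite inE yW orbT.
  by move=> z; rewrite inE => /orP[/eqP ->|/ym].
exists a; first by rewrite inE eqxx.
move=> z; rewrite inE => /orP[/eqP ->//|/ym zy]; exact: leq_trans zy (ltnW h).
Qed.

Lemma fset_argmax (W : {fset T}) x0 : x0 \in W ->
  exists2 y, y \in W & forall z, z \in W -> dep z <= dep y.
Proof. move=> h; exact: (@seq_argmax (W : seq T) x0). Qed.

Lemma select_deep (W : {fset T}) k : k <= #|`W| ->
  exists Q : {fset T}, [/\ Q `<=` W, #|`Q| = k &
    forall q y, q \in Q -> y \in W -> dep q < dep y -> y \in Q].
Proof.
elim: k => [|k IH] hk.
  by exists fset0; split => //; rewrite ?fsub0set ?cardfs0.
have [Q [QW cQ cl]] := IH (ltnW hk).
have [x xWQ] : exists x, x \in W `\` Q.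
  case: (fset_0Vmem (W `\` Q)) => [e|[x hx]]; last by exists x.
  move: hk; rewrite -cQ; move/eqP: e; rewrite fsetD_eq0 => /fsubset_leq_card.
  by move=> h1 h2; move: (leq_trans h2 h1); rewrite ltnn.
have [y yWQ ym] := fset_argmax xWQ.
move: yWQ; rewrite inE => /andP[yQ yW].
exists (y |` Q); split.
- by rewrite fsubUset fsub1set yW QW.
- by rewrite cardfsU1 yQ cQ.
- move=> q z; rewrite !inE => /orP[/eqP ->|qQ] zW lt.
    case zQ: (z \in Q); first by rewrite orbT.
    have : z \in W `\` Q by rewrite inE zQ zW.
    by move/ym; rewrite leqNgt lt.
  by rewrite (cl q z qQ zW lt) orbT.
Qed.
End Carry.

Section Carry2.
Variable T : choiceType.
Variable dep : T -> nat.
Variable par : T -> T.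

Definition HA (A : {fset T}) :=
  forall y, y \in A -> 0 < dep y -> par y \in A /\ dep (par y) = (dep y).-1.

Definition desc (A : {fset T}) u :=
  [fset y in A | (dep u <= dep y) && (iter (dep y - dep u) par y == u)].

Lemma iter_dep A y k : HA A -> y \in A -> k <= dep y ->
  iter k par y \in A /\ dep (iter k par y) = dep y - k.
Proof.
move=> hA yA; elim: k => [|k IH] hk; first by rewrite subn0.
have [h1 h2] := IH (ltnW hk).
have pos : 0 < dep (iter k par y) by rewrite h2 subn_gt0.
have [h3 h4] := hA _ h1 pos.
by split; rewrite iterS // h4 h2 subnS.
Qed.

Lemma card_chain (f : nat -> T) m : {in iota 0 m &, injective f} ->
  #|` [fset f j | j in iota 0 m]| = m.
Proof. by move=> h; rewrite card_in_imfset //= undup_id ?iota_uniq // size_iota. Qed.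

Lemma chain_desc A y m : HA A -> y \in A -> m <= dep y ->
  m.+1 <= #|` desc A (iter m par y)|.
Proof.
move=> hA yA hm.
set C := [fset iter j par y | j in iota 0 m.+1].
have -> : m.+1 = #|` C|.
  rewrite card_chain // => i j; rewrite !mem_iota /= !add0n => hi hj e.
  have [_ di] := iter_dep hA yA (leq_trans (ltnSE hi) hm).
  have [_ dj] := iter_dep hA yA (leq_trans (ltnSE hj) hm).
  have := congr1 dep e; rewrite di dj => e2.
  have := congr1 (fun x => dep y - x) e2.
  by rewrite !subKn // ?(leq_trans (ltnSE hi) hm) ?(leq_trans (ltnSE hj) hm).
apply: fsubset_leq_card; apply/fsubsetP => x /imfsetP [j hj ->]; move: hj; rewrite mem_iota add0n => hj.
have hj' : j <= m := ltnSE hj.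
have [xA dx] := iter_dep hA yA (leq_trans hj' hm).
have [_ dm] := iter_dep hA yA hm.
rewrite !inE xA /= dx dm leq_sub2l //=.
rewrite -iterD; have -> : (dep y - j - (dep y - m) + j = m)%N by lia.
by [].
Qed.
End Carry2.

Section Carry3.
Variable T : choiceType.
Variable dep : T -> nat.
Variable par : T -> T.
Variable n : nat.
Hypothesis n_gt0 : 0 < n.

Definition goodPs (A : {fset T}) (Ps : seq {fset T}) :=
  [/\ forall Q, Q \in Ps -> [/\ Q `<=` A, #|`Q| = n &
         exists u, forall x, x \in Q -> exists2 k, k < n & iter k par x = u],
      forall Q1 Q2, Q1 \in Ps -> Q2 \in Ps -> (exists x, x \in Q1 /\ x \in Q2) -> Q1 = Q2 &
      forall y, y \in A -> (n.-1 <= dep y)%N -> exists2 Q, Q \in Ps & y \in Q].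

Lemma carry_ind N A : #|`A| <= N -> HA dep par A -> exists Ps, goodPs A Ps.
Proof.
elim: N A => [|N IH] A hN hA.
  have A0 : A = fset0 by apply: cardfs0_eq; apply/eqP; rewrite -leqn0.
  by exists [::]; split => // y; rewrite A0 inE.
set U := [fset u in A | n <= #|` desc dep par A u|].
case: (fset_0Vmem U) => [U0|[u0 u0U]].
  exists [::]; split => // y yA hy.
  have [rA dr] := iter_dep hA yA (leqnn (dep y)).
  have := chain_desc hA yA (leqnn (dep y)).
  have : iter (dep y) par y \notin U by rewrite U0 inE.
  rewrite !inE rA /= -ltnNge => h1 h2.
  exfalso; move: h1 h2 hy; lia.
have [u uU umax] := fset_argmax dep u0U.
move: uU; rewrite !inE => /andP[uA cu].
have dbound : forall x, x \in desc dep par A u -> (dep x - dep u < n)%N.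
  move=> x; rewrite !inE => /andP[xA /andP[dux ix]].
  rewrite ltnNge; apply/negP => hk.
  set k := (dep x - dep u)%N in ix hk.
  have k1 : (k.-1 <= dep x)%N by rewrite /k; lia.
  have [cA dc] := iter_dep hA xA k1.
  have hc := chain_desc hA xA k1.
  have cU : iter k.-1 par x \in U.
    rewrite !inE cA /=; move: hc hk n_gt0; rewrite /k; lia.
  have := umax _ cU; rewrite dc /k => h1; lia.
have [Q [Qd cQ cl]] := select_deep dep cu.
have QA : Q `<=` A by apply: fsubset_trans Qd _; apply/fsubsetP => x; rewrite !inE => /andP[].
set A' := A `\` Q.
have cA' : #|` A'| <= N.
  rewrite /A' cardfsDS // cQ; move: hN n_gt0; lia.
have hA' : HA dep par A'.
  move=> y; rewrite !inE => /andP[yQ yA] pos.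
  have [pA dp] := hA y yA pos.
  split => //; rewrite pA andbT; apply/negP => pQ.
  have pd := fsubsetP Qd _ pQ.
  have yd : y \in desc dep par A u.
    move: pd; rewrite !inE yA pA /= dp => /andP[h1 h2].
    apply/andP; split; first by lia.
    have -> : (dep y - dep u = (dep y).-1 - dep u + 1)%N by lia.
    by rewrite iterD.
  by move/negP: yQ; apply; apply: cl pQ yd _; rewrite dp; lia.
have [Ps [h1 h2 h3]] := IH A' cA' hA'.
exists (Q :: Ps); split.
- move=> Q'; rewrite inE => /orP[/eqP ->|QP].
    split => //; exists u => x /(fsubsetP Qd) xd.
    exists (dep x - dep u)%N; first exact: dbound.
    by move: xd; rewrite !inE => /andP[_ /andP[_ /eqP]].
  have [s1 s2 s3] := h1 _ QP; split => //.
  by apply: fsubset_trans s1 _; apply: fsubsetDl.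
- have dj : forall Q', Q' \in Ps -> forall x, x \in Q -> x \in Q' -> False.
    move=> Q' QP x xQ xQ'; have [s1 _ _] := h1 _ QP.
    by move: (fsubsetP s1 _ xQ'); rewrite !inE xQ.
  move=> Q1 Q2; rewrite !inE => /orP[/eqP ->|Q1P] /orP[/eqP ->|Q2P] [x [x1 x2]] //.
  + by case: (dj _ Q2P x).
  + by case: (dj _ Q1P x).
  + exact: h2 Q1P Q2P (ex_intro _ x (conj x1 x2)).
- move=> y yA hy; case yQ: (y \in Q); first by exists Q; rewrite ?inE ?eqxx.
  have yA' : y \in A' by rewrite !inE yQ yA.
  have [Q' Q'P yQ'] := h3 y yA' hy.
  by exists Q'; rewrite // inE Q'P orbT.
Qed.

End Carry3.

Lemma mem_In (T : eqType) (x : T) (s : seq T) : x \in s -> List.In x s.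
Proof. elim: s => //= a s IH; rewrite inE => /orP[/eqP ->|/IH]; [by left|by right]. Qed.

Section Konig.
Variable X : Type.
Variable agree : nat -> X -> X -> Prop.
Variable V : nat -> X -> Prop.
Hypothesis agree_sym : forall r c c', agree r c c' -> agree r c' c.
Hypothesis agree_trans : forall r c1 c2 c3, agree r c1 c2 -> agree r c2 c3 -> agree r c1 c3.
Hypothesis agree_down : forall r c c', agree r.+1 c c' -> agree r c c'.
Hypothesis V_down : forall r c, V r.+1 c -> V r c.
Hypothesis V_fin : forall r, exists L : list X, forall c, V r c -> exists2 c', List.In c' L & agree r c c'.

Lemma V_downn r s c : r <= s -> V s c -> V r c.
Proof.
move=> h; rewrite -(subnK h); elim: (s - r) => //= k IH.
by rewrite addSn => /V_down.
Qed.

Lemma agree_downn r s c c' : r <= s -> agree s c c' -> agree r c c'.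
Proof.
move=> h; rewrite -(subnK h); elim: (s - r) => //= k IH.
by rewrite addSn => /agree_down.
Qed.

Lemma konig_helper r (P : X -> Prop) :
  (forall s, r <= s -> exists c, V s c /\ P c) ->
  exists c1, [/\ V r c1, P c1 & forall s, r <= s -> exists c, [/\ V s c, P c & agree r c1 c]].
Proof.
move=> hP.
have [L hL] := V_fin r.
pose ext l s := exists c, [/\ V s c, P c & agree r l c].
have ext_down : forall l s s', r <= s' -> s' <= s -> ext l s -> ext l s'.
  move=> l s s' h1 h2 [c [v p a]]; exists c; split => //; exact: V_downn v.
have [l [_ hl]] : exists l, List.In l L /\ forall s, r <= s -> ext l s.
  apply: NNPP => hn.
  have hb : forall L', (forall l, List.In l L' -> List.In l L) ->
      exists S, r <= S /\ forall l, List.In l L' -> ~ ext l S.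
    elim => [|a L' IH] hsub.
      by exists r.
    have [S [hS hS']] := IH (fun l h => hsub l (or_intror h)).
    have [sa [hsa nsa]] : exists s, r <= s /\ ~ ext a s.
      apply: NNPP => h2; apply: hn; exists a; split; first exact: hsub a (or_introl erefl).
      move=> s hs; apply: NNPP => h3; apply: h2; by exists s.
    exists (maxn S sa); split; first by apply: leq_trans hS (leq_maxl _ _).
    move=> l [<-|hl'] he.
      by apply: nsa; apply: ext_down he => //; apply: leq_maxr.
    by apply: (hS' l hl'); apply: ext_down he => //; apply: leq_maxl.
  have [S [hS hS']] := hb L (fun l h => h).
  have [c [vc pc]] := hP S hS.
  have [l hlL al] := hL c (V_downn hS vc).
  by apply: (hS' l hlL); exists c; split => //; apply: agree_sym.
have [c1 [v1 p1 a1]] := hl r (leqnn r).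
exists c1; split => // s hs.
have [c [v p a]] := hl s hs.
exists c; split => //; apply: agree_trans (agree_sym a1) a.
Qed.

Definition good r c := V r c /\ forall s, r <= s -> exists c', V s c' /\ agree r c c'.

Lemma good_base : (forall r, exists c, V r c) -> exists c, good 0 c.
Proof.
move=> hne; have [c1 [v1 _ h]] := @konig_helper 0 (fun _ => True) (fun s _ => 
  let: ex_intro c hc := hne s in ex_intro _ c (conj hc I)).
exists c1; split => // s hs; have [c [? _ ?]] := h s hs; by exists c.
Qed.

Lemma good_step r c : good r c -> exists c1, good r.+1 c1 /\ agree r c c1.
Proof.
move=> [vc hc].
have [c1 [v1 p1 h]] := @konig_helper r.+1 (agree r c) (fun s hs => hc s (ltnW hs)).
exists c1; split => //; split => // s hs; have [c' [? _ ?]] := h s hs; by exists c'.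
Qed.

Lemma konig : (forall r, exists c, V r c) ->
  exists cs : nat -> X, forall r, V r (cs r) /\ agree r (cs r) (cs r.+1).
Proof.
move=> hne.
have b := constructive_indefinite_description _ (good_base hne).
have st : forall r (c : {c | good r c}), {c1 | good r.+1 c1 /\ agree r (proj1_sig c) c1}.
  move=> r [c hc]; apply: constructive_indefinite_description; exact: good_step hc.
pose fix f r : {c | good r c} :=
  match r with
  | 0 => b
  | r'.+1 => let: exist c1 (conj g _) := st r' (f r') in exist _ c1 g
  end.
exists (fun r => proj1_sig (f r)) => r; split; first by case: (f r) => c [].
simpl; case: (st r (f r)) => c1 [g a] /=; exact: a.
Qed.
End Konig.

Lemma fun_list (T : eqType) (Y : Type) (y0 : Y) (l : seq T) (cand : T -> list Y) :
  exists L : list (T -> Y), forall c : T -> Y, (forall g, g \in l -> List.In (c g) (cand g)) ->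
    exists2 c', List.In c' L & forall g, g \in l -> c' g = c g.
Proof.
elim: l => [|a l IH].
  by exists [:: fun _ => y0] => c _; exists (fun _ => y0) => //; left.
have [L' hL'] := IH.
exists (List.flat_map (fun v => List.map (fun f => fun x => if x == a then v else f x) L') (cand a)).
move=> c hc.
have [c' c'L hc'] := hL' c (fun g hg => hc g (mem_behead (s := a :: l) hg)).
exists (fun x => if x == a then c a else c' x).
  apply/List.in_flat_map; exists (c a); split; first by apply: hc; rewrite mem_head.
  by apply/List.in_map_iff; exists c'.
move=> g; rewrite inE; case: eqP => [->//|_] /= hg; exact: hc'.
Qed.

Section Grp.
Variable G : countType.
Variable mul : G -> G -> G.
Variable one : G.
Variable inv : G -> G.
Hypothesis hg : is_group mul one inv.

Lemma mulA x y z : mul x (mul y z) = mul (mul x y) z.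
Proof. by case: hg. Qed.
Lemma mul1g x : mul one x = x.
Proof. by case: hg => _ []. Qed.
Lemma mulg1 x : mul x one = x.
Proof. by case: hg => _ [] _ []. Qed.
Lemma mulVg x : mul (inv x) x = one.
Proof. by case: hg => _ [] _ [] _ []. Qed.
Lemma mulgV x : mul x (inv x) = one.
Proof. by case: hg => _ [] _ [] _ []. Qed.
Lemma mulKg x y : mul (inv x) (mul x y) = y.
Proof. by rewrite mulA mulVg mul1g. Qed.
Lemma mulKVg x y : mul x (mul (inv x) y) = y.
Proof. by rewrite mulA mulgV mul1g. Qed.
Lemma mulgK x y : mul (mul y x) (inv x) = y.
Proof. by rewrite -mulA mulgV mulg1. Qed.
Lemma mulg_inj x : injective (mul x).
Proof. by move=> y z e; rewrite -(mulKg x y) e mulKg. Qed.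
Lemma invK x : inv (inv x) = x.
Proof. by rewrite -(mulg1 (inv (inv x))) -(mulVg x) mulA mulVg mul1g. Qed.
Lemma inv1 : inv one = one.
Proof. by rewrite -(mul1g (inv one)) mulgV. Qed.
Lemma invM x y : inv (mul x y) = mul (inv y) (inv x).
Proof.
apply: (@mulg_inj (mul x y) (inv (mul x y)) (mul (inv y) (inv x))).
rewrite mulgV -mulA (mulA y) mulgV mul1g mulgV //.
Qed.

Definition prodw (w : seq G) := foldr mul one w.
Lemma prodw_cat w1 w2 : prodw (w1 ++ w2) = mul (prodw w1) (prodw w2).
Proof. by elim: w1 => [|a w IH] /=; rewrite ?mul1g // IH mulA. Qed.
Lemma prodw_inv w : prodw (rev (map inv w)) = inv (prodw w).
Proof.
elim: w => [|a w IH] /=; first by rewrite inv1.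
by rewrite rev_cons -cats1 prodw_cat IH /= mulg1 invM.
Qed.









Definition Part n (K : {fset G}) (P : G -> {fset G}) :=
 [/\ forall g, g \in P g, forall g, #|` P g| = n,
     forall g g' x, x \in P g -> x \in P g' -> P g = P g' &
     forall g x y, x \in P g -> y \in P g -> mul (inv x) y \in K].

Definition ctr (Q : {fset G}) : G := if one \in Q then one else head one (Q : seq G).
Lemma ctr_in (Q : {fset G}) x : x \in Q -> ctr Q \in Q.
Proof.
rewrite /ctr; case: ifP => // _.
have : forall s : seq G, x \in s -> head one s \in s by case=> // a s _; rewrite mem_head.
by apply.
Qed.

Lemma backend n K P (F : {fset G}) : Part n K P -> F `<=` P one ->
  exists (k : nat) (T : 'I_k.+1 -> {fset G}), fair_polytile mul one T /\ F `<=` T ord0.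
Proof.
move=> [p1 p2 p3 p4] FP.
pose shape g := [fset mul (inv (ctr (P g))) x | x in P g].
have ctrP : forall g, ctr (P g) \in P g by move=> g; apply: (ctr_in (p1 g)).
have Pctr : forall g, P (ctr (P g)) = P g by move=> g; apply: (p3 _ _ _ (p1 _) (ctrP g)).
have shape1 : forall g, one \in shape g.
  by move=> g; apply/imfsetP; exists (ctr (P g)) => //; rewrite mulVg.
have shapeK : forall g, shape g `<=` K.
  by move=> g; apply/fsubsetP => x /imfsetP [y yP ->]; apply: p4 yP.
have shapec : forall g, #|` shape g| = n.
  by move=> g; rewrite card_imfset ?p2 //; apply: mulg_inj.
pose used (S : {fset G}) : bool :=
  if excluded_middle_informative (exists g, shape g = S) then true else false.
have usedP : forall S, used S -> exists g, shape g = S.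
  by move=> S; rewrite /used; case: excluded_middle_informative.
have usedI : forall g, used (shape g).
  by move=> g; rewrite /used; case: excluded_middle_informative => // [[]]; exists g.
pose US := [fset S in fpowerset K | used S].
pose T0 := shape one.
pose rest := [seq S <- (US : seq {fset G}) | S != T0].
pose L := T0 :: rest.
have Lu : uniq L.
  rewrite /L /= filter_uniq ?fset_uniq // andbT mem_filter eqxx //.
have LP : forall S, S \in L -> exists g, shape g = S.
  move=> S; rewrite inE => /orP[/eqP ->|]; first by exists one.
  by rewrite mem_filter => /andP[_]; rewrite !inE => /andP[_ /usedP].
have shL : forall g, shape g \in L.
  move=> g; rewrite inE; case: eqP => //= ne.
  have h : shape g \in US by rewrite !inE fpowersetE shapeK usedI.
  by rewrite mem_filter h andbT; apply/eqP.
set k := size rest.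
have sL : size L = k.+1 by [].
pose T (i : 'I_k.+1) := nth T0 L i.
have TL : forall i : 'I_k.+1, T i \in L by move=> i; apply: mem_nth; rewrite sL.
exists k, T; split; last first.
  have -> : T ord0 = P one.
    rewrite /T /= /T0 /shape; apply/fsetP => x; apply/imfsetP/idP.
      by move=> [y yP ->]; rewrite /ctr p1 inv1 mul1g.
    by move=> xP; exists x => //; rewrite /ctr p1 inv1 mul1g.
  by [].
split; last first.
  by move=> i j; have [g1 <-] := LP _ (TL i); have [g2 <-] := LP _ (TL j); rewrite !shapec.
split.
  by move=> i; have [g <-] := LP _ (TL i).
exists (fun (i : 'I_k.+1) d => ctr (P d) = d /\ shape d = T i); split.
  move=> i; have [g hg'] := LP _ (TL i); exists (ctr (P g)); rewrite Pctr; split => //.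
  by rewrite /shape Pctr.
move=> g.
pose d := ctr (P g).
have hi : index (shape d) L < k.+1 by rewrite -sL index_mem.
exists (Ordinal hi, d); split.
  split.
    split; first by rewrite /= /d Pctr.
    by rewrite /T /= nth_index.
  exists (mul (inv d) g); first by rewrite /T /= nth_index //; apply/imfsetP; exists g; rewrite // /d /shape Pctr.
  by rewrite mulKVg.
move=> [i' d'] /= [[c' s'] [t tT e]].
have : mul d' t \in P d'.
  move: tT; rewrite -s' => /imfsetP [x xP ->]; by rewrite c' mulKVg.
move=> hx.
have e2 : P g = P d' by rewrite e; apply: p3 _ _ _ (p1 _) hx.
have dd : d = d' by rewrite /d e2 c'.
have ii : Ordinal hi = i'.
  apply: val_inj; change (index (shape d) L = i'); rewrite dd s' /T index_uniq // sL //.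
by rewrite ii dd.
Qed.










Lemma swap n K P a x y : Part n K P -> x \in P a -> y \notin P a -> x != a ->
  exists K' P', Part n K' P' /\ P' a = y |` (P a `\ x).
Proof.
move=> [p1 p2 p3 p4] xA yA xa.
set A := P a; set Bq := P y.
have xB : x \notin Bq.
  apply/negP => xB; move/negP: yA; apply; rewrite /A (p3 a y x xA xB); exact: p1.
have yx : y != x by apply/eqP => e; move: yA; rewrite e xA.
set A' := y |` (A `\ x); set B' := x |` (Bq `\ y).
pose P' g := if g \in A' then A' else if g \in B' then B' else P g.
set K' := K `|` [fset mul (inv u) v | u in A `|` Bq, v in A `|` Bq].
have A'sub : A' `<=` A `|` Bq.
  apply/fsubsetP => z; rewrite !inE => /orP[/eqP ->|/andP[_ ->]]; last by [].
  by rewrite p1 orbT.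
have B'sub : B' `<=` A `|` Bq.
  apply/fsubsetP => z; rewrite !inE => /orP[/eqP ->|/andP[_ ->]]; last by rewrite orbT.
  by rewrite xA.
have outside : forall g z, g \notin A' -> g \notin B' -> z \in P g -> z \notin A `|` Bq.
  move=> g z gA gB zP; rewrite !inE; apply/negP => /orP[zA|zB].
    have e : P g = A by apply: p3 zP zA.
    have gA0 : g \in A by rewrite -e p1.
    move: gA gB; rewrite !inE gA0 andbT; case: (g =P x) => [->|] /=; rewrite ?eqxx ?orbT //.
  have e : P g = Bq by apply: p3 zP zB.
  have gB0 : g \in Bq by rewrite -e p1.
  move: gA gB; rewrite !inE gB0 andbT; case: (g =P y) => [->|] /=; rewrite ?eqxx ?orbT //.
have disjAB : forall z, z \in A' -> z \in B' -> False.
  move=> z; rewrite !inE => /orP[/eqP ->|/andP[zx zA]] /orP[/eqP e|/andP[zy zB]].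
  - by move: yx; rewrite e eqxx.
  - by move: zy; rewrite eqxx.
  - by move: zx; rewrite e eqxx.
  - by move/negP: yA; apply; rewrite /A (p3 _ _ _ zA zB) p1.
exists K', P'; split; last by rewrite /P' ifT // /A' !inE p1 andbT [a == x]eq_sym xa orbT.
split.
- by move=> g; rewrite /P'; case: ifP => // _; case: ifP => // _; apply: p1.
- move=> g; rewrite /P'; case: ifP => _; last case: ifP => _; last exact: p2.
    by rewrite /A' cardfsU1 !inE (negbTE yA) andbF /= -(p2 a) (cardfsD1 x A) xA.
  by rewrite /B' cardfsU1 !inE (negbTE xB) andbF /= -(p2 y) (cardfsD1 y Bq) p1.
- move=> g g' z; rewrite /P'.
  case: ifP => gA; [|case: ifP => gB]; (case: ifP => g'A; [|case: ifP => g'B]) => // h1 h2.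
  + by case: (disjAB z h1 h2).
  + by move: (outside _ _ (negbT g'A) (negbT g'B) h2); rewrite (fsubsetP A'sub _ h1).
  + by case: (disjAB z h2 h1).
  + by move: (outside _ _ (negbT g'A) (negbT g'B) h2); rewrite (fsubsetP B'sub _ h1).
  + by move: (outside _ _ (negbT gA) (negbT gB) h1); rewrite (fsubsetP A'sub _ h2).
  + by move: (outside _ _ (negbT gA) (negbT gB) h1); rewrite (fsubsetP B'sub _ h2).
  + exact: p3 h1 h2.
- have hK : forall u v, u \in A `|` Bq -> v \in A `|` Bq -> mul (inv u) v \in K'.
    by move=> u v hu hv; rewrite !inE; apply/orP; right; apply/imfset2P; exists u => //; exists v.
  move=> g u v; rewrite /P'; case: ifP => _.
    by move=> hu hv; apply: hK; apply: (fsubsetP A'sub).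
  case: ifP => _.
    by move=> hu hv; apply: hK; apply: (fsubsetP B'sub).
  by move=> hu hv; rewrite !inE (p4 _ _ _ hu hv).
Qed.

Lemma gather n K P (F : {fset G}) : Part n K P -> #|` one |` F| <= n ->
  exists K' P', Part n K' P' /\ F `<=` P' one.
Proof.
move=> hP hS.
set S := one |` F.
suff : forall m K P, Part n K P -> #|` S `\` P one| <= m ->
    exists K' P', Part n K' P' /\ S `<=` P' one.
  move=> h; have [K' [P' [h1 h2]]] := h _ K P hP (leqnn _).
  exists K', P'; split => //; apply: fsubset_trans h2; exact: fsubsetUr.
elim => [|m IH] K0 P0 hP0 hm.
  exists K0, P0; split => //; rewrite -fsetD_eq0 -cardfs_eq0; move: hm; lia.
case: (fset_0Vmem (S `\` P0 one)) => [e|[s]].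
  by exists K0, P0; split => //; rewrite -fsetD_eq0 e.
rewrite inE => /andP[sP sS].
have [p1 p2 p3 p4] := hP0.
have [x xP xS] : exists2 x, x \in P0 one & x \notin S.
  case: (fset_0Vmem (P0 one `\` S)) => [e|[x]]; last by rewrite inE => /andP[? ?]; exists x.
  move/eqP: e; rewrite fsetD_eq0 => sub.
  have : P0 one `<=` S `\ s by rewrite fsubsetD1 sub sP.
  move/fsubset_leq_card; rewrite p2 => h.
  have := cardfsD1 s S; rewrite sS; move: h hS; rewrite -/S; lia.
have xa : x != one by apply/negP => /eqP e; move: xS; rewrite e !inE eqxx.
have [K1 [P1 [hP1 e1]]] := swap hP0 xP sP xa.
apply: (IH K1 P1 hP1).
have sub : S `\` P1 one `<=` (S `\` P0 one) `\ s.
  apply/fsubsetP => z; rewrite e1 in_fsetD in_fset1U in_fsetD1 => /andP[h1 zS].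
  rewrite in_fsetD1 in_fsetD zS andbT.
  move: h1; rewrite negb_or negb_and negbK => /andP[-> /orP[/eqP zx|->]] //.
  by move: xS; rewrite -zx zS.
move/fsubset_leq_card: sub; have := cardfsD1 s (S `\` P0 one); rewrite in_fsetD sS sP /=.
move=> h1 h2; apply: leq_trans h2 _; move: hm; rewrite h1 add1n ltnS; exact.
Qed.


Variable Sp : {fset G}.
Hypothesis Sp_inv : forall s, s \in Sp -> inv s \in Sp.

Fixpoint B (D : nat) : {fset G} :=
  match D with
  | 0 => [fset one]
  | D'.+1 => B D' `|` [fset mul s x | s in Sp, x in B D']
  end.

Lemma BP D x : reflect (exists w, [/\ all (mem Sp) w, size w <= D & x = prodw w]) (x \in B D).
Proof.
apply: (iffP idP).
  elim: D x => [|D IH] x /=.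
    by rewrite inE => /eqP ->; exists [::].
  rewrite inE => /orP[/IH [w [h1 h2 h3]]|].
    by exists w; split => //; apply: leqW.
  move/imfset2P => [s sS [y yB ->]].
  have [w [h1 h2 h3]] := IH y yB.
  by exists (s :: w); rewrite /= h3 sS h1 ltnS h2.
elim: D x => [|D IH] x [w [h1 h2 ->]] /=.
  by case: w h1 h2 => // _ _; rewrite inE.
case: w h1 h2 => [|s w] /=.
  by move=> _ _; rewrite inE; apply/orP; left; apply: IH; exists [::].
move=> /andP[sS h1] h2; rewrite inE; apply/orP; right.
apply/imfset2P; exists s => //; exists (prodw w) => //.
by apply: IH; exists w.
Qed.

Lemma B_one D : one \in B D.
Proof. by apply/BP; exists [::]. Qed.

Lemma B_mono a b : a <= b -> B a `<=` B b.
Proof.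
move=> h; apply/fsubsetP => x /BP [w [h1 h2 h3]]; apply/BP; exists w; split => //.
exact: leq_trans h2 h.
Qed.

Lemma B_mul a b x y : x \in B a -> y \in B b -> mul x y \in B (a + b).
Proof.
move=> /BP [w1 [a1 a2 ->]] /BP [w2 [b1 b2 ->]]; apply/BP; exists (w1 ++ w2).
by rewrite all_cat a1 b1 size_cat prodw_cat leq_add.
Qed.

Lemma B_inv a x : x \in B a -> inv x \in B a.
Proof.
move=> /BP [w [a1 a2 ->]]; apply/BP; exists (rev (map inv w)); rewrite prodw_inv.
split => //; last by rewrite size_rev size_map.
rewrite all_rev all_map; apply/allP => s sw /=; apply: Sp_inv.
by move/allP: a1; apply.
Qed.

Lemma B_Sp s : s \in Sp -> s \in B 1.
Proof. by move=> h; apply/BP; exists [:: s]; rewrite /= h mulg1. Qed.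



Variable n : nat.
Hypothesis n_gt0 : 0 < n.
Hypothesis one_Sp : one \in Sp.
Section Targets.
Variable X : {fset G}.
Variable h : G.
Variable D0 : nat.
Hypothesis hD0 : h \in B D0.
Hypothesis hfar : forall x x', x \in X -> x' \in X -> mul (inv x) (mul x' h) \notin B n.

Let Z := [fset mul x h | x in X].
Definition Pdep y : pred nat := fun D => has (fun z => mul (inv y) z \in B D) Z.
Definition def y := exists D, Pdep y D.
Definition dep y : nat :=
  match excluded_middle_informative (def y) with
  | left e => ex_minn e
  | right _ => 0
  end.

Lemma depP y : def y -> Pdep y (dep y) /\ forall D, Pdep y D -> dep y <= D.
Proof.
rewrite /dep; case: excluded_middle_informative => // e _.
by case: ex_minnP => m hm hmin; split.
Qed.

Lemma PdepP y D : reflect (exists2 z, z \in Z & mul (inv y) z \in B D) (Pdep y D).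
Proof. exact: hasP. Qed.

Lemma def_step y s : def y -> s \in B 1 -> def (mul y s) /\ dep y <= (dep (mul y s)).+1.
Proof.
move=> dy sB.
have [D /PdepP [z zZ hz]] := dy.
have dys : def (mul y s).
  exists (1 + D)%N; apply/PdepP; exists z => //.
  rewrite invM -mulA; apply: B_mul => //; exact: B_inv.
split => //; clear z zZ hz.
have [/PdepP [z zZ hz] _] := depP dys.
have [_ hmin] := depP dy.
rewrite -add1n; apply: hmin; apply/PdepP; exists z => //.
have -> : mul (inv y) z = mul s (mul (inv (mul y s)) z).
  by rewrite invM mulA mulA mulgV mul1g.
exact: B_mul.
Qed.

Lemma dep_dec y : def y -> 0 < dep y -> exists2 s, s \in Sp & dep (mul y s) < dep y.
Proof.
move=> dy pos; have [/PdepP [z zZ hz] hmin] := depP dy.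
case/BP: hz => w [h1 h2 h3].
case: w h1 h2 h3 => [|s w] /=.
  move=> _ _ e; have : Pdep y 0 by apply/PdepP; exists z => //; rewrite e; exact: B_one.
  by move/hmin; rewrite leqn0 => /eqP e0; move: pos; rewrite e0.
move=> /andP[sS aw] sw e; exists s => //.
have ds : def (mul y s) := (def_step dy (B_Sp sS)).1.
have [_ hmin2] := depP ds.
apply: (leq_ltn_trans (hmin2 (dep y).-1 _)); last by rewrite ltn_predL.
apply/PdepP; exists z => //.
rewrite invM -mulA e mulA mulVg mul1g.
apply/BP; exists w; split => //; rewrite -ltnS prednK //.
Qed.



Definition par y := mul y (nth one (Sp : seq G) (find (fun s => dep (mul y s) < dep y) Sp)).



Lemma par_step y : exists2 s, s \in B 1 & par y = mul y s.
Proof.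
rewrite /par; set i := find _ _.
exists (nth one Sp i) => //; apply: B_Sp.
case: (ltnP i (size Sp)) => hi; first exact: mem_nth.
by rewrite nth_default.
Qed.

Lemma par_dep y : def y -> 0 < dep y -> def (par y) /\ dep (par y) = (dep y).-1.
Proof.
move=> dy pos.
have hh : has (fun s => dep (mul y s) < dep y) Sp.
  by have [s sS lt] := dep_dec dy pos; apply/hasP; exists s.
have := nth_find one hh; rewrite -/(par y) => lt.
have [s sB e] := par_step y.
have [dp le] := def_step dy sB; rewrite -e in dp le.
split => //; move: lt le; lia.
Qed.

Definition Aset := [fset iter k par x | x in X, k in iota 0 (dep x).+1].

Lemma def_X x : x \in X -> def x.
Proof.
move=> xX; exists D0; apply/PdepP; exists (mul x h); first by apply/imfsetP; exists x.
by rewrite mulKg.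
Qed.

Lemma iter_def x k : def x -> k <= dep x -> def (iter k par x) /\ dep (iter k par x) = dep x - k.
Proof.
move=> dx; elim: k => [|k IH] hk; first by rewrite subn0.
have [d1 d2] := IH (ltnW hk).
have pos : 0 < dep (iter k par x) by rewrite d2 subn_gt0.
have [d3 d4] := par_dep d1 pos.
by rewrite iterS; split => //; rewrite d4 d2 subnS.
Qed.

Lemma HA_Aset : HA dep par Aset.
Proof.
move=> y /imfset2P [x xX [k]]; rewrite mem_iota add0n ltnS => hk -> pos.
have [d1 d2] := iter_def (def_X xX) hk.
have hk' : k < dep x by move: pos; rewrite d2; lia.
split.
  by apply/imfset2P; exists x => //; exists k.+1; rewrite ?mem_iota ?add0n ?ltnS // iterS.
have [_ d4] := par_dep d1 pos; exact: d4.
Qed.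

Lemma X_far x : x \in X -> n <= dep x.
Proof.
move=> xX; rewrite leqNgt; apply/negP => lt.
have [/PdepP [z /imfsetP [x' x'X ->] hz] _] := depP (def_X xX).
move/negP: (hfar xX x'X); apply.
exact: (fsubsetP (B_mono (ltnW lt))).
Qed.


Lemma iter_par_B x k : exists2 w, w \in B k & iter k par x = mul x w.
Proof.
elim: k => [|k [w wB e]]; first by exists one; rewrite ?mulg1 ?B_one.
have [s sB e2] := par_step (iter k par x).
exists (mul w s); first by rewrite -addn1; apply: B_mul.
by rewrite iterS e2 e mulA.
Qed.

Lemma level_pieces : exists Ps : seq {fset G},
 [/\ forall Q, Q \in Ps -> #|` Q| = n /\ forall x y, x \in Q -> y \in Q -> mul (inv x) y \in B (n + n),
     forall Q1 Q2, Q1 \in Ps -> Q2 \in Ps -> (exists x, x \in Q1 /\ x \in Q2) -> Q1 = Q2 &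
     forall x, x \in X -> exists2 Q, Q \in Ps & x \in Q].
Proof.
have [Ps [h1 h2 h3]] := carry_ind n_gt0 (leqnn #|` Aset|) HA_Aset.
exists Ps; split => //.
- move=> Q QP; have [_ c [u hu]] := h1 Q QP; split => // x y xQ yQ.
  have [kx kxn ex] := hu x xQ; have [ky kyn ey] := hu y yQ.
  have [wx wxB ex'] := iter_par_B x kx; have [wy wyB ey'] := iter_par_B y ky.
  have -> : mul (inv x) y = mul wx (inv wy).
    have -> : y = mul u (inv wy) by rewrite -ey ey' mulgK.
    by rewrite mulA -ex ex' mulKg.
  apply: (fsubsetP (B_mono (_ : kx + ky <= n + n))); first by apply: leq_add; apply: ltnW.
  by apply: B_mul => //; apply: B_inv.
- move=> x xX; apply: h3.
    by apply/imfset2P; exists x => //; exists 0.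
  by apply: leq_trans (X_far xX); apply: leq_pred.
Qed.

End Targets.

Definition E r : {fset G} := [fset x | x in pmap (@pickle_inv G) (iota 0 r)].

Lemma E_pickle g : g \in E (choice.pickle g).+1.
Proof.
apply/imfsetP; exists g => //; rewrite mem_pmap; apply/mapP; exists (choice.pickle g).
  by rewrite mem_iota add0n ltnS leqnn.
by rewrite pickleK_inv.
Qed.

Lemma E_mono r s : r <= s -> E r `<=` E s.
Proof.
move=> h; apply/fsubsetP => x /imfsetP [y]; rewrite mem_pmap => /mapP [i]; rewrite !mem_iota !add0n => hi e ->.
apply/imfsetP; exists y => //; rewrite mem_pmap; apply/mapP; exists i => //.
by rewrite mem_iota add0n (leq_trans hi h).
Qed.

Section FinCase.
Variable D : nat.
Hypothesis hD : B D.+1 `<=` B D.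

Lemma B_closed j : B j `<=` B D.
Proof.
elim: j => [|j IH]; first by apply: B_mono.
apply/fsubsetP => y /=; rewrite inE => /orP[/(fsubsetP IH)//|/imfset2P [s sS [x xB ->]]].
apply: (fsubsetP hD) => /=; rewrite inE; apply/orP; right.
by apply/imfset2P; exists s => //; exists x => //; apply: (fsubsetP IH).
Qed.

Lemma BD_mul x y : x \in B D -> y \in B D -> mul x y \in B D.
Proof. by move=> hx hy; apply: (fsubsetP (B_closed (D + D))); apply: B_mul. Qed.

Lemma partition_fin : Part #|` B D| (B D) (fun g => [fset mul g x | x in B D]).
Proof.
have sub : forall g g' x, x \in [fset mul g a | a in B D] -> x \in [fset mul g' a | a in B D] ->
    [fset mul g a | a in B D] `<=` [fset mul g' a | a in B D].
  move=> g g' x /imfsetP [a aB ->] /imfsetP [b bB e].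
  apply/fsubsetP => y /imfsetP [c cB ->]; apply/imfsetP.
  exists (mul (mul b (inv a)) c); first by apply: BD_mul => //; apply: BD_mul => //; apply: B_inv.
  have -> : g = mul g' (mul b (inv a)) by rewrite mulA -e mulgK.
  by rewrite -mulA.
split.
- by move=> g; apply/imfsetP; exists one; rewrite ?mulg1 ?B_one.
- by move=> g; rewrite card_imfset //; apply: mulg_inj.
- move=> g g' x h1 h2; apply/eqP; rewrite eqEfsubset; apply/andP; split.
    exact: sub h1 h2.
  exact: sub h2 h1.
- move=> g x y /imfsetP [a aB ->] /imfsetP [b bB ->].
  by rewrite invM -mulA mulKg; apply: BD_mul => //; apply: B_inv.
Qed.
End FinCase.

Lemma B_card_grow : (forall D, ~ (B D.+1 `<=` B D)) -> forall D, D < #|` B D|.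
Proof.
move=> h; elim => [|D IH]; first by rewrite /= cardfs1.
have : B D `<` B D.+1.
  rewrite fproperE; apply/andP; split; first by apply: B_mono.
  by apply/negP; apply: h.
by move/fproper_ltn_card; apply: leq_trans.
Qed.

Lemma B_inf : (forall D, ~ (B D.+1 `<=` B D)) ->
  forall F0 : {fset G}, exists h D0, h \in B D0 /\ h \notin F0.
Proof.
move=> h F0; case: (fset_0Vmem (B #|` F0| `\` F0)) => [e|[x]].
  move/eqP: e; rewrite fsetD_eq0 => /fsubset_leq_card.
  by rewrite leqNgt (B_card_grow h).
by rewrite inE => /andP[h1 h2]; exists x, #|` F0|.
Qed.

Hypothesis hinf : forall F0 : {fset G}, exists h D0, h \in B D0 /\ h \notin F0.

Lemma level_exists (X : {fset G}) : exists Ps : seq {fset G},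
 [/\ forall Q, Q \in Ps -> #|` Q| = n /\ forall x y, x \in Q -> y \in Q -> mul (inv x) y \in B (n + n),
     forall Q1 Q2, Q1 \in Ps -> Q2 \in Ps -> (exists x, x \in Q1 /\ x \in Q2) -> Q1 = Q2 &
     forall x, x \in X -> exists2 Q, Q \in Ps & x \in Q].
Proof.
set F0 := [fset mul a b | a in [fset mul (inv x') x | x in X, x' in X], b in B n].
have [h [D0 [hD hF]]] := hinf F0.
apply: (level_pieces hD) => x x' xX x'X; apply/negP => hb.
move/negP: hF; apply; apply/imfset2P; exists (mul (inv x') x).
  by apply/imfset2P; exists x => //; exists x'.
exists (mul (inv x) (mul x' h)) => //.
by rewrite -mulA mulKVg mulKg.
Qed.

Definition Valid (K : {fset G}) r (c : G -> {fset G}) := forall g, g \in E r ->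
  [/\ g \in c g, #|` c g| = n, forall x y, x \in c g -> y \in c g -> mul (inv x) y \in K &
      forall g' z, g' \in E r -> z \in c g -> z \in c g' -> c g = c g'].

Definition agree r (c c' : G -> {fset G}) := forall g, g \in E r -> c g = c' g.

Lemma partition_inf : exists K P, Part n K P.
Proof.
set K := B (n + n).
have := @konig (G -> {fset G}) agree (Valid K).
case.
- by move=> r c c' h g gE; rewrite h.
- by move=> r c1 c2 c3 h1 h2 g gE; rewrite h1 ?h2.
- move=> r c h g gE; have [a1 a2 a3 a4] := h g (fsubsetP (E_mono (leqnSn r)) _ gE).
  split => // g' z g'E; apply: a4; exact: (fsubsetP (E_mono (leqnSn r))).
- move=> r.
  have [L hL] := fun_list fset0 (enum_fset (E r))
     (fun g => enum_fset (fpowerset [fset mul g k | k in K])).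
  exists L => c hc.
  have hcand : forall g, g \in enum_fset (E r) ->
      List.In (c g) (enum_fset (fpowerset [fset mul g k | k in K])).
    move=> g gE; apply: mem_In.
    have [a1 _ a3 _] := hc g gE.
    have : c g \in fpowerset [fset mul g k | k in K].
      rewrite fpowersetE; apply/fsubsetP => y yc; apply/imfsetP; exists (mul (inv g) y).
        exact: a3.
      by rewrite mulKVg.
    by [].
  have [c' c'L hc'] := hL c hcand.
  exists c' => // g gE; symmetry; exact: hc'.
- move=> r; have [Ps [h1 h2 h3]] := level_exists (E r).
  pose flt (g : G) := filter (fun Q : {fset G} => g \in Q) Ps.
  pose c g := head [fset g] (flt g).
  have hc : forall g, g \in E r -> c g \in Ps /\ g \in c g.
    move=> g gE; have [Q QP gQ] := h3 g gE.
    have QF : Q \in flt g by rewrite mem_filter gQ QP.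
    have : c g \in flt g.
      by rewrite /c; case: (flt g) QF => //= a l _; rewrite mem_head.
    by rewrite mem_filter => /andP[-> ->].
  exists c => g gE; have [cP gc] := hc g gE; have [s1 s2] := h1 _ cP.
  split => // g' z g'E z1 z2; have [c'P _] := hc g' g'E.
  by apply: h2 => //; exists z.
- move=> cs hcs.
  have ag : forall r s, r <= s -> agree r (cs r) (cs s).
    move=> r s /subnK <-; elim: (s - r) => [|k IH] g gE; first by [].
    rewrite IH // addSn; have [_ a] := hcs (k + r)%N; apply: a.
    by apply: (fsubsetP (E_mono (leq_addl k r))).
  exists K, (fun g => cs (choice.pickle g).+1 g).
  have V1 : forall g : G, Valid K (choice.pickle g).+1 (cs (choice.pickle g).+1) by move=> g; have [] := hcs (choice.pickle g).+1.
  split.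
  + by move=> g; have [] := V1 g g (E_pickle g).
  + by move=> g; have [] := V1 g g (E_pickle g).
  + move=> g g' z z1 z2.
    set r := maxn (choice.pickle g).+1 (choice.pickle g').+1.
    have e1 : cs (choice.pickle g).+1 g = cs r g by apply: ag; [apply: leq_maxl | apply: E_pickle].
    have e2 : cs (choice.pickle g').+1 g' = cs r g' by apply: ag; [apply: leq_maxr | apply: E_pickle].
    rewrite e1 e2 in z1 z2 *.
    have [Vr _] := hcs r.
    have gE : g \in E r by apply: (fsubsetP (E_mono (leq_maxl _ _))); apply: E_pickle.
    have g'E : g' \in E r by apply: (fsubsetP (E_mono (leq_maxr _ _))); apply: E_pickle.
    by have [_ _ _ a4] := Vr g gE; apply: a4 z1 z2.
  + by move=> g x y; have [_ _ a3 _] := V1 g g (E_pickle g); apply: a3.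
Qed.

End Grp.

Theorem corollary6p3 (G : countType) (mul : G -> G -> G) (one : G) (inv : G -> G) :
  is_group mul one inv ->
  forall F : {fset G},
    exists (k : nat) (T : 'I_k.+1 -> {fset G}),
      fair_polytile mul one T /\ F `<=` T ord0.
Proof.
move=> hg F.
set S := one |` F.
set Sp := S `|` [fset inv s | s in S].
have Sp_inv : forall s, s \in Sp -> inv s \in Sp.
  move=> s; rewrite in_fsetU => /orP[sS|/imfsetP [t tS ->]].
    by rewrite in_fsetU; apply/orP; right; apply/imfsetP; exists s.
  by rewrite (invK hg) in_fsetU; apply/orP; left.
have one_Sp : one \in Sp by rewrite in_fsetU in_fset1U eqxx.
have SB : S `<=` B mul one Sp 1.
  by apply/fsubsetP => s sS; apply: (B_Sp hg); rewrite in_fsetU sS.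
suff [n [K [P [hP hn]]]] : exists n K P, Part mul inv n K P /\ (#|` S| <= n)%N.
  have [K' [P' [hP' FP]]] := gather hP hn.
  have hh := backend hg hP' FP. exact hh.
case: (classic (exists D, B mul one Sp D.+1 `<=` B mul one Sp D)) => [[D hD]|hn].
  exists #|` B mul one Sp D|, (B mul one Sp D), (fun g => [fset mul g x | x in B mul one Sp D]).
  split; first by have hh := partition_fin hg Sp_inv hD; exact hh.
  apply: fsubset_leq_card; apply: fsubset_trans SB _; exact: B_closed hD 1.
have hinf := B_inf (fun D h => hn (ex_intro _ D h)).
have n_gt0 : (0 < #|` S|)%N by rewrite (cardfsD1 one S) in_fset1U eqxx.
have [K [P hP]] := partition_inf hg Sp_inv n_gt0 one_Sp hinf.
by exists #|` S|, K, P.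
Qed.
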